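(* There is an absolute constant $C>0$ such that the following holds. Let $(G,s,t)$ be an oriented serial superedge on $n$ vertices with principal subgraphs $(G_1,s_1,t_1),\dots,(G_k,s_k,t_k)$, each $G_i$ non-serial and having $n_i$ vertices. Then $$\sum_{i=1}^k n_i\,\big|\mathsf{NT}(G_i)/\mathrm{Aut}_{\mathrm{or}}(G_i,s_i,t_i)\big|\le C\,n\,\big|\mathsf{NT}(G)/\mathrm{Aut}_{\mathrm{or}}(G,s,t)\big|,$$ i.e. the left side is $O\big(n\,|\mathsf{NT}(G)/\mathrm{Aut}_{\mathrm{or}}(G,s,t)|\big)$.
   Context: All graphs are finite, simple and undirected. An oriented series-parallel graph is a triple $(G,s,t)$ where $G$ is a graph and $s\neq t$ are vertices, defined recursively: (i) $G$ is a single edge with vertex set $\{s,t\}$; or (ii) (serial superedge) there are $k\ge 2$ oriented series-parallel graphs $(G_1,s_1,t_1),\dots,(G_k,s_k,t_k)$ with $s_1=s$, $t_k=t$, $t_i=s_{i+1}$ for $1\le i<k$, $V(G_i)\cap V(G_{i+1})=\{s_{i+1}\}$, $V(G_i)\cap V(G_j)=\emptyset$ for $|i-j|\ge2$, and $G=G_1\cup\dots\cup G_k$; or (iii) (parallel superedge) there are $k\ge2$ oriented series-parallel graphs $(G_1,s,t),\dots,(G_k,s,t)$ with $V(G_i)\cap V(G_j)=\{s,t\}$ for $i\neq j$ and $G=G_1\cup\dots\cup G_k$. The $G_i$ are the principal subgraphs; a graph is non-serial if it is not a serial superedge. $\mathrm{Aut}_{\mathrm{or}}(H,u,v)$ is the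 group of automorphisms of $H$ fixing $u$ and $v$. A near tree of $H$ is a spanning subgraph obtained from a spanning tree of $H$ by deleting one edge; $\mathsf{NT}(H)$ is the set of near trees, and $\mathsf{NT}(H)/\Gamma$ the set of orbits under the group $\Gamma$ (near trees $A,B$ in the same orbit iff $A=\sigma(B)$ for some $\sigma\in\Gamma$). *)

(* Defs.v *)
From mathcomp Require Import all_boot fingroup perm.
From mathcomp Require Import boolp.

Set Implicit Arguments.
Unset Strict Implicit.
Unset Printing Implicit Defensive.

(* A (finite simple) graph living inside an ambient finite type T:
   a vertex set and a set of edges, each edge a 2-element vertex set. *)
Record graph (T : finType) := Graph { gV : {set T}; gE : {set {set T}} }.

Section SP.
Variable T : finType.

Definition serial_cond (G : graph T) (s t : T) (k : nat)
    (Gs : nat -> graph T) (ss ts : nat -> T) : Prop :=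
  [/\ 2 <= k, ss 0 = s, ts k.-1 = t,
      (forall i, i.+1 < k -> ts i = ss i.+1 /\
                             gV (Gs i) :&: gV (Gs i.+1) = [set ss i.+1]) &
      [/\ (forall i j, i.+1 < j -> j < k -> gV (Gs i) :&: gV (Gs j) = set0),
           gV G = \bigcup_(i < k) gV (Gs i) &
           gE G = \bigcup_(i < k) gE (Gs i)]].

Definition parallel_cond (G : graph T) (s t : T) (k : nat)
    (Gs : nat -> graph T) : Prop :=
  [/\ 2 <= k,
      (forall i j, i < k -> j < k -> i != j ->
          gV (Gs i) :&: gV (Gs j) = [set s; t]),
      gV G = \bigcup_(i < k) gV (Gs i) &
      gE G = \bigcup_(i < k) gE (Gs i)].

Inductive SP : graph T -> T -> T -> Prop :=
| SP_edge (s t : T) : s != t -> SP (Graph [set s; t] [set [set s; t]]) s t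
| SP_serial (G : graph T) (s t : T) (k : nat) (Gs : nat -> graph T) (ss ts : nat -> T) :
    serial_cond G s t k Gs ss ts ->
    (forall i, i < k -> SP (Gs i) (ss i) (ts i)) -> SP G s t
| SP_parallel (G : graph T) (s t : T) (k : nat) (Gs : nat -> graph T) :
    parallel_cond G s t k Gs ->
    (forall i, i < k -> SP (Gs i) s t) -> SP G s t.

Definition serial_superedge (G : graph T) (s t : T) (k : nat)
    (Gs : nat -> graph T) (ss ts : nat -> T) : Prop :=
  serial_cond G s t k Gs ss ts /\ (forall i, i < k -> SP (Gs i) (ss i) (ts i)).

Definition non_serial (G : graph T) (s t : T) : Prop :=
  ~ exists k Gs ss ts, serial_superedge G s t k Gs ss ts.

(* Spanning subgraphs are given by their edge sets F (vertex set gV G). *)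
Definition adj (F : {set {set T}}) : rel T := fun x y => [set x; y] \in F.

Definition connected_on (V : {set T}) (F : {set {set T}}) : Prop :=
  forall x y, x \in V -> y \in V -> connect (adj F) x y.

Definition acyclic (F : {set {set T}}) : Prop :=
  ~ exists c : seq T, 3 <= size c /\ ucycle (adj F) c.

Definition spanning_tree (G : graph T) (F : {set {set T}}) : Prop :=
  F \subset gE G /\ connected_on (gV G) F /\ acyclic F.

Definition near_tree (G : graph T) (F' : {set {set T}}) : Prop :=
  exists F e, spanning_tree G F /\ e \in F /\ F' = F :\ e.

Definition NT (G : graph T) : {set {set {set T}}} := [set F | `[< near_tree G F >]].

Definition is_aut_or (G : graph T) (u v : T) (sigma : {perm T}) : bool :=
  [&& sigma @: gV G == gV G,
      [forall x in gV G, forall y in gV G,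
         ([set x; y] \in gE G) == ([set sigma x; sigma y] \in gE G)],
      sigma u == u & sigma v == v].

Definition img_edges (sigma : {perm T}) (B : {set {set T}}) : {set {set T}} :=
  [set [set sigma x | x in e] | e : {set T} in B].

Definition NT_orbit (G : graph T) (u v : T) (A : {set {set T}}) : {set {set {set T}}} :=
  [set B in NT G | [exists sigma : {perm T}, is_aut_or G u v sigma && (B == img_edges sigma A)]].

Definition n_orbits (G : graph T) (u v : T) : nat :=
  #|[set NT_orbit G u v A | A in NT G]|.

End SP.

(* Main.v *)
Require Import Defs.
From mathcomp Require Import all_boot fingroup perm.
From mathcomp Require Import boolp.
From mathcomp Require Import zify.
From Stdlib Require Import Classical.

Set Implicit Arguments.
Unset Strict Implicit.
Unset Printing Implicit Defensive.


Section Gen.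
Variable T : finType.
Implicit Types (F B : {set {set T}}) (x y : T) (sigma tau : {perm T}).

Lemma adj_sym F : symmetric (adj F).
Proof. by move=> x y; rewrite /adj setUC. Qed.

Lemma connect_symF F x y : connect (adj F) x y = connect (adj F) y x.
Proof. exact: (sym_connect_sym (adj_sym F)). Qed.

Lemma connect_mono F F' x y : F \subset F' -> connect (adj F) x y -> connect (adj F') x y.
Proof.
move=> sub; apply: connect_sub => a b h; apply: connect1; exact: (subsetP sub).
Qed.

Lemma connect_map (e e' : rel T) (f : T -> T) :
  (forall a b, e a b -> f a = f b \/ e' (f a) (f b)) ->
  forall x y, connect e x y -> connect e' (f x) (f y).
Proof.
move=> H x y /connectP [p]; elim: p x => [|z p IH] x /=; first by move=> _ ->.
case/andP=> exz pz ly; apply: connect_trans (IH z pz ly).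
by case: (H _ _ exz) => [->|h]; [exact: connect0 | exact: connect1].
Qed.

Lemma connect_closure (e : rel T) (L : pred T) :
  (forall a b, e a b -> L a -> L b) -> forall x y, connect e x y -> L x -> L y.
Proof.
move=> H x y /connectP [p]; elim: p x => [|z p IH] x /=; first by move=> _ ->.
by case/andP=> exz pz ly Lx; apply: (IH z pz ly); apply: H exz Lx.
Qed.

Lemma set2_eq a b x y : [set a; b] = [set x; y] ->
  (a = x /\ b = y) \/ (a = y /\ b = x).
Proof.
move=> E.
have ha : a \in [set x; y] by rewrite -E set21.
have hb : b \in [set x; y] by rewrite -E set22.
have hx : x \in [set a; b] by rewrite E set21.
have hy : y \in [set a; b] by rewrite E set22.
move: ha hb hx hy; rewrite !in_set2.
case/orP=> /eqP ea; case/orP => /eqP eb; subst a b => hx hy.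
- by left; split => //; move: hy; rewrite orbb => /eqP.
- by left.
- by right.
- by left; split => //; move: hx; rewrite orbb => /eqP.
Qed.

Lemma imset_set2 (f : T -> T) x y : f @: [set x; y] = [set f x; f y].
Proof. by rewrite imsetU1 imset_set1. Qed.

Lemma cycle_bridge F c : 3 <= size c -> ucycle (adj F) c ->
  exists x y, [/\ x != y, [set x; y] \in F & connect (adj (F :\ [set x; y])) y x].
Proof.
case: c => [|x [|y [|z q]]] //= _ /andP [cyc uq].
move: cyc; rewrite /= => /and3P [exy eyz pth].
move: uq; rewrite /= !inE !negb_or => /andP [/and3P [nxy nxz nxq] /andP [/andP [nyz nyq] _]].
exists x, y; split => //.
apply/connectP; exists (z :: rcons q x); last by rewrite /= last_rcons.
rewrite /=.
apply/andP; split.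
  rewrite /adj !inE; move: eyz; rewrite /adj => ->; rewrite andbT.
  apply/negP => /eqP E; have : x \in [set y; z] by rewrite E set21.
  by rewrite in_set2 (negbTE nxz) (negbTE nxy).
apply: (@sub_in_path _ (predC1 y) (adj F)) pth.
  move=> a b /= ha hb; rewrite /adj !inE => ->; rewrite andbT.
  apply/negP => /eqP E; have : y \in [set a; b] by rewrite E set22.
  by rewrite in_set2 !(eq_sym y) (negbTE ha) (negbTE hb).
apply/allP => a; rewrite -rcons_cons mem_rcons !inE => /or3P [/eqP ->|/eqP ->|ha].
- done.
- by rewrite eq_sym.
- by apply/eqP => ay; rewrite -ay ha in nyq.
Qed.

Lemma acyclic_bridge F x y : acyclic F -> x != y -> [set x; y] \in F ->
  ~~ connect (adj (F :\ [set x; y])) x y.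
Proof.
move=> Hac nxy exy; apply/negP => /connectP [p pth ly].
move: ly; case: (shortenP pth) => p' pth' up' _ ly.
apply: Hac; exists (x :: p'); split.
  case: p' pth' up' ly => [|z [|w r]] //=.
  - by move=> _ _ yx; rewrite yx eqxx in nxy.
  - by move=> + _ yz; rewrite yz /adj !inE eqxx.
rewrite /ucycle up' andbT /= rcons_path.
rewrite (sub_path _ pth') /=; last by move=> a b; rewrite /adj !inE => /andP [].
by rewrite /adj -ly setUC.
Qed.

Lemma exists_spanning_tree (H : graph T) :
  connected_on (gV H) (gE H) -> exists F, spanning_tree H F.
Proof.
move=> cH.
suff: forall F, F \subset gE H -> connected_on (gV H) F -> exists F', spanning_tree H F'.
  by apply; rewrite ?subxx.
move=> F0; have [n] := ubnP #|F0|; elim: n F0 => // n IH F ltFn sF conF.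
case: (classic (acyclic F)) => [ac|nac]; first by exists F.
have [c [sc uc]] : exists c : seq T, 3 <= size c /\ ucycle (adj F) c.
  by apply: NNPP => h; apply: nac.
have [x [y [nxy eF cyx]]] := cycle_bridge sc uc.
apply: (IH (F :\ [set x; y])).
- by move: ltFn; rewrite (cardsD1 [set x; y] F) eF.
- by apply: subset_trans sF; apply: subsetDl.
- move=> a b ha hb; apply: (connect_sub _ (conF a b ha hb)) => c1 c2 h.
  case: (boolP ([set c1; c2] == [set x; y])) => [/eqP /set2_eq [[-> ->]|[-> ->]] | ne].
  + by rewrite connect_symF.
  + exact: cyx.
  + by apply: connect1; rewrite /adj !inE ne.
Qed.

Definition hat (sigma : {perm T}) (e : {set T}) : {set T} := sigma @: e.

Lemma hat_inj sigma : injective (hat sigma).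
Proof. exact: imset_inj perm_inj. Qed.

Lemma img_edgesE sigma B : img_edges sigma B = hat sigma @: B.
Proof. by []. Qed.

Lemma hatI sigma A B : hat sigma @: (A :&: B) = hat sigma @: A :&: hat sigma @: B.
Proof. by apply: imsetI => a b _ _; apply: hat_inj. Qed.

Lemma hat_mul sigma tau e : hat (sigma * tau)%g e = hat tau (hat sigma e).
Proof. by rewrite /hat -imset_comp; apply: eq_imset => a; rewrite /= permM. Qed.

Lemma hat1 e : hat 1%g e = e.
Proof. by rewrite /hat (eq_imset _ (@perm1 T)) imset_id. Qed.

Lemma hatK sigma e : hat (sigma^-1)%g (hat sigma e) = e.
Proof. by rewrite -hat_mul mulgV hat1. Qed.

Lemma img_mul sigma tau B :
  img_edges (sigma * tau)%g B = img_edges tau (img_edges sigma B).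
Proof. by rewrite !img_edgesE -imset_comp; apply: eq_imset => e; rewrite /= hat_mul. Qed.

Lemma img1 B : img_edges 1%g B = B.
Proof. by rewrite img_edgesE (eq_imset _ hat1) imset_id. Qed.

Lemma imgK sigma B : img_edges (sigma^-1)%g (img_edges sigma B) = B.
Proof. by rewrite -img_mul mulgV img1. Qed.

Lemma connected_transport sigma V F :
  connected_on V F -> connected_on (sigma @: V) (hat sigma @: F).
Proof.
move=> cF x' y' /imsetP [x hx ->] /imsetP [y hy ->].
apply: (connect_map _ (cF x y hx hy)) => a b hab; right.
by rewrite /adj -imset_set2; apply: imset_f.
Qed.

Lemma aut_mul (H : graph T) u v sigma tau :
  is_aut_or H u v sigma -> is_aut_or H u v tau -> is_aut_or H u v (sigma * tau)%g.
Proof.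
case/and4P => /eqP hV /forallP hE /eqP hu /eqP hv.
case/and4P => /eqP hV' /forallP hE' /eqP hu' /eqP hv'.
apply/and4P; split.
- by rewrite (eq_imset _ (permM sigma tau)) imset_comp hV hV'.
- apply/forallP => x; apply/implyP => hx; apply/forallP => y; apply/implyP => hy.
  have := implyP (hE x) hx => /forallP /(_ y) /implyP /(_ hy) /eqP ->.
  have hsx : sigma x \in gV H by rewrite -hV imset_f.
  have hsy : sigma y \in gV H by rewrite -hV imset_f.
  have := implyP (hE' (sigma x)) hsx => /forallP /(_ (sigma y)) /implyP /(_ hsy) /eqP ->.
  by rewrite !permM.
- by rewrite permM hu hu'.
- by rewrite permM hv hv'.
Qed.

Lemma aut_inv (H : graph T) u v sigma :
  is_aut_or H u v sigma -> is_aut_or H u v (sigma^-1)%g.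
Proof.
case/and4P => /eqP hV /forallP hE /eqP hu /eqP hv.
have hV' : (sigma^-1)%g @: gV H = gV H.
  by rewrite -{1}hV -imset_comp (eq_imset _ (permK sigma)) imset_id.
apply/and4P; split.
- by rewrite hV'.
- apply/forallP => x; apply/implyP => hx; apply/forallP => y; apply/implyP => hy.
  have hsx : (sigma^-1)%g x \in gV H by rewrite -hV' imset_f.
  have hsy : (sigma^-1)%g y \in gV H by rewrite -hV' imset_f.
  have := implyP (hE ((sigma^-1)%g x)) hsx => /forallP /(_ ((sigma^-1)%g y)) /implyP /(_ hsy) /eqP.
  by rewrite !permKV => ->.
- by rewrite -{1}hu permK.
- by rewrite -{1}hv permK.
Qed.

Lemma aut_one (H : graph T) u v : is_aut_or H u v 1%g.
Proof.
apply/and4P; split.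
- by rewrite (eq_imset _ (@perm1 T)) imset_id.
- by apply/forallP => x; apply/implyP => _; apply/forallP => y; apply/implyP => _; rewrite !perm1.
- by rewrite perm1.
- by rewrite perm1.
Qed.

Lemma orbit_eq (H : graph T) u v sigma A :
  is_aut_or H u v sigma ->
  NT_orbit H u v (img_edges sigma A) = NT_orbit H u v A.
Proof.
move=> hs; apply/setP => B; rewrite !inE; congr (_ && _); apply/existsP/existsP.
  case=> tau /andP [ht /eqP ->]; exists (sigma * tau)%g%g.
  by rewrite aut_mul //= img_mul.
case=> tau /andP [ht /eqP ->]; exists ((sigma^-1)%g * tau)%g.
by rewrite aut_mul ?aut_inv //= img_mul imgK.
Qed.

Lemma orbit_self (H : graph T) u v A : A \in NT H -> A \in NT_orbit H u v A.
Proof. by move=> hA; rewrite inE hA /=; apply/existsP; exists 1%g; rewrite aut_one img1 eqxx. Qed.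

Lemma card_imset_le (aT bT cT : finType) (b0 : bT) (X : {set aT}) (f : aT -> bT) (g : aT -> cT) :
  {in X &, forall w1 w2, g w1 = g w2 -> f w1 = f w2} -> #|f @: X| <= #|g @: X|.
Proof.
move=> H.
pose h c := if [pick w1 in X | g w1 == c] is Some w1 then f w1 else b0.
suff -> : f @: X = h @: (g @: X) by apply: leq_imset_card.
apply/setP => b; apply/imsetP/imsetP.
  case=> w1 hx ->; exists (g w1); first by apply: imset_f.
  rewrite /h; case: pickP => [w2 /andP [hy /eqP gy]|]; first by apply: H.
  by move/(_ w1); rewrite hx eqxx.
case=> c /imsetP [w1 hx ->] ->; rewrite /h; case: pickP => [w2 /andP [hy /eqP gy]|].
  by exists w2.
by move/(_ w1); rewrite hx eqxx.
Qed.

Lemma sum_disj_card (U : finType) (Q : nat -> {set U}) (S : {set U}) n :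
  (forall i, i < n -> Q i \subset S) ->
  (forall i j, i < n -> j < n -> i != j -> Q i :&: Q j = set0) ->
  \sum_(i < n) #|Q i| <= #|S|.
Proof.
move=> hS hD.
suff [E sub] : \sum_(i < n) #|Q i| = #|\bigcup_(i < n) Q i| /\ \bigcup_(i < n) Q i \subset S.
  by rewrite E subset_leq_card.
elim: n hS hD => [|n IH] hS hD; first by rewrite !big_ord0 cards0 sub0set.
have [E sub] := IH (fun i hi => hS i (ltnW hi))
  (fun i j hi hj => hD i j (ltnW hi) (ltnW hj)).
rewrite !big_ord_recr /= E; split; last by rewrite subUset sub hS.
rewrite cardsU.
suff -> : \bigcup_(i < n) Q i :&: Q n = set0 by rewrite cards0 subn0.
apply/setP => w1; rewrite !inE; apply/negP => /andP [/bigcupP [i _ hx] hn].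
have := hD i n (ltnW (ltn_ord i)) (ltnSn n) (negbT (ltn_eqF (ltn_ord i))).
by move/setP/(_ w1); rewrite !inE hx hn.
Qed.

End Gen.


Definition Eav (T : finType) (E : {set {set T}}) (c : T) := [set e in E | c \notin e].

Lemma Eav_mono (T : finType) (E E' : {set {set T}}) c : E \subset E' -> Eav E c \subset Eav E' c.
Proof. by move=> sub; apply/subsetP => e; rewrite !inE => /andP [h1 h2]; rewrite h2 (subsetP sub _ h1). Qed.

Definition SerOK (T : finType) (G : graph T) s t k Gs (ss ts : nat -> T) :=
  serial_cond G s t k Gs ss ts /\
  (forall i, i < k -> [/\ ss i != ts i, ss i \in gV (Gs i) & ts i \in gV (Gs i)]).

Definition su (T : finType) (k : nat) (ss : nat -> T) (t : T) m := if m < k then ss m else t.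

Section Serial.
Variable T : finType.
Variables (G : graph T) (s t : T) (k : nat) (Gs : nat -> graph T) (ss ts : nat -> T).
Local Notation OK := (SerOK G s t k Gs ss ts).
Local Notation u := (su k ss t).
Local Notation V i := (gV (Gs i)).

Lemma k2 (hok : OK) : 1 < k. Proof. by case: hok => -[]. Qed.
Lemma k0 (hok : OK) : 0 < k. Proof. by have := k2 hok; lia. Qed.

Lemma u0 (hok : OK) : u 0 = s.
Proof. by rewrite /su (k0 hok); case: hok => -[]. Qed.

Lemma uk (hok : OK) : u k = t.
Proof. by rewrite /su ltnn. Qed.

Lemma u_ss (hok : OK) i : i < k -> u i = ss i.
Proof. by rewrite /su => ->. Qed.

Lemma ts_u (hok : OK) i : i < k -> ts i = u i.+1.
Proof.
case: (hok) => hser hP.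
move=> hi; rewrite /su; case: ltnP => h.
  by case: hser => _ _ _ H _; case: (H i h).
have -> : i = k.-1 by lia.
by case: hser.
Qed.

Lemma u_in (hok : OK) i : i < k -> u i \in V i.
Proof. by move=> hi; rewrite u_ss //; case: hok => _ /(_ i hi) []. Qed.

Lemma uS_in (hok : OK) i : i < k -> u i.+1 \in V i.
Proof. by move=> hi; rewrite -(ts_u hok hi); case: hok => _ /(_ i hi) []. Qed.

Lemma uk_in (hok : OK) : u k \in V k.-1.
Proof. have := uS_in hok (i := k.-1); rewrite prednK ?(k0 hok) //; apply; have := k0 hok; lia. Qed.

Lemma Dlem (hok : OK) a b x : a < b -> b < k -> x \in V a -> x \in V b -> b = a.+1 /\ x = u b.
Proof.
move=> hab hb xa xb; case: (hok) => -[_ _ _ Hn [Hd _ _]] _.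
case: (ltngtP a.+1 b) => h.
- by have := Hd a b h hb; move/setP/(_ x); rewrite !inE xa xb.
- by lia.
- have [_ E] := Hn a ltac:(by rewrite h).
  move: E => /setP/(_ x); rewrite !inE xa h xb => /esym /eqP ->.
  by split => //; rewrite u_ss.
Qed.

Lemma u_neq_next (hok : OK) i : i < k -> u i != u i.+1.
Proof. by move=> hi; rewrite u_ss // -(ts_u hok hi); case: hok => _ /(_ i hi) []. Qed.

Lemma u_inj (hok : OK) a b : a <= k -> b <= k -> u a = u b -> a = b.
Proof.
wlog lt : a b / a < b.
  move=> W ha hb e; case: (ltngtP a b) => h //; first exact: W.
  by symmetry; apply: W.
move=> ha hb e; case: (ltngtP a.+1 b) => h.
- have h1 : b.-1 < k by lia.
  have ha' : u a \in V a by apply: (u_in hok); lia.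
  have hb' : u a \in V b.-1 by rewrite e; have := uS_in hok h1; rewrite prednK //; lia.
  have [E1 E2] := Dlem hok (a := a) (b := b.-1) ltac:(lia) h1 ha' hb'.
  by have := u_neq_next hok (i := a) ltac:(lia); rewrite E2 E1 eqxx.
- by lia.
- by move: e; rewrite -h => /eqP; rewrite (negbTE (u_neq_next hok _)) //; lia.
Qed.

Lemma inVG (hok : OK) x : x \in gV G -> exists2 i, i < k & x \in V i.
Proof. by case: hok => -[_ _ _ _ [_ -> _]] _ /bigcupP [i _ h]; exists i. Qed.

Lemma VsubG (hok : OK) i : i < k -> V i \subset gV G.
Proof.
move=> hi; case: hok => -[_ _ _ _ [_ -> _]] _; apply/subsetP => x hx.
by apply/bigcupP; exists (Ordinal hi).
Qed.

Lemma inEG (hok : OK) e : e \in gE G -> exists2 i, i < k & e \in gE (Gs i).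
Proof. by case: hok => -[_ _ _ _ [_ _ ->]] _ /bigcupP [i _ h]; exists i. Qed.

Lemma EsubG (hok : OK) i : i < k -> gE (Gs i) \subset gE G.
Proof.
move=> hi; case: hok => -[_ _ _ _ [_ _ ->]] _; apply/subsetP => x hx.
by apply/bigcupP; exists (Ordinal hi).
Qed.

Lemma chain (hok : OK) (e : rel T) b : b <= k ->
  (forall l, l < b -> connect e (u l) (u l.+1)) -> connect e (u 0) (u b).
Proof.
elim: b => [|b IH] hb H; first exact: connect0.
apply: connect_trans (IH (ltnW hb) (fun l hl => H l (ltnW hl))) (H b (ltnSn b)).
Qed.

Lemma chainV (hok : OK) (e : rel T) j x : j < k ->
  (forall l, l <= j -> forall y, y \in V l -> connect e (u l) y) ->
  x \in V j -> connect e (u 0) x.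
Proof.
move=> hj H hx.
apply: connect_trans (chain hok (b := j) (ltnW hj) _) (H j (leqnn j) x hx).
move=> l hl; apply: H (ltnW hl) _ _; apply: (uS_in hok); lia.
Qed.

End Serial.

Section SPlemmas.
Variable T : finType.
Implicit Types (H : graph T) (a b : T).

Lemma SP_basic H a b : SP H a b -> [/\ a != b, a \in gV H & b \in gV H].
Proof.
elim => {H a b}.
- by move=> a b nab /=; rewrite set21 set22.
- move=> G s t k Gs ss ts hser _ IH.
  have hok : SerOK G s t k Gs ss ts by split.
  have k0' := k0 hok.
  split.
  + apply/negP => /eqP st.
    have := u_inj hok (a := 0) (b := k) (leq0n k) (leqnn k).
    rewrite (u0 hok) (uk hok) st => /(_ erefl) k0e.
    by have := k2 hok; rewrite -k0e.
  + rewrite -(u0 hok); apply: (subsetP (VsubG hok k0')); exact: (u_in hok k0').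
  + rewrite -(uk hok); apply: (subsetP (VsubG hok (i := k.-1) _)); last exact: (uk_in hok).
    by lia.
- move=> G s t k Gs [k2' _ hV _] _ IH.
  have k0' : 0 < k by lia.
  have [nst hs ht] := IH 0 k0'; rewrite hV; split => //; apply/bigcupP; by exists (Ordinal k0').
Qed.

Lemma SP_edges H a b : SP H a b -> forall e, e \in gE H ->
  exists x y, [/\ x != y, x \in gV H, y \in gV H & e = [set x; y]].
Proof.
elim => {H a b}.
- by move=> a b nab e /=; rewrite inE => /eqP ->; exists a, b; rewrite set21 set22.
- move=> G s t k Gs ss ts hser hsp IH e.
  have hok : SerOK G s t k Gs ss ts by split => // i hi; apply: SP_basic (hsp i hi).
  move=> /(inEG hok) [i hi he].
  have [x [y [nxy hx hy ->]]] := IH i hi e he.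
  by exists x, y; split => //; apply: (subsetP (VsubG hok hi)).
- move=> G s t k Gs [k2' _ hV hE] _ IH e; rewrite hE => /bigcupP [i _ he].
  have [x [y [nxy hx hy ->]]] := IH i (ltn_ord i) e he.
  by exists x, y; split => //; rewrite hV; apply/bigcupP; exists i.
Qed.

Lemma mem_edge H a b e z : SP H a b -> e \in gE H -> z \in e -> z \in gV H.
Proof.
move=> hs he; have [x [y [_ hx hy ->]]] := SP_edges hs he.
by rewrite in_set2 => /orP [] /eqP ->.
Qed.

Lemma sub_Eav H a b (E : {set {set T}}) c : SP H a b -> gE H \subset E -> c \notin gV H ->
  gE H \subset Eav E c.
Proof.
move=> hs sub hc; apply/subsetP => e he; rewrite inE (subsetP sub _ he) /=.
by apply/negP => /(mem_edge hs he); apply/negP.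
Qed.

Lemma SP_conn H a b : SP H a b -> forall x, x \in gV H -> connect (adj (gE H)) a x.
Proof.
elim => {H a b}.
- move=> a b nab x /=; rewrite in_set2 => /orP [] /eqP ->; first exact: connect0.
  by apply: connect1; rewrite /adj inE.
- move=> G s t k Gs ss ts hser hsp IH x.
  have hok : SerOK G s t k Gs ss ts by split => // i hi; apply: SP_basic (hsp i hi).
  move=> /(inVG hok) [j hj hx].
  rewrite -(u0 hok); apply: (chainV hok hj _ hx) => l hl y hy.
  rewrite (u_ss hok); last by lia.
  apply: connect_mono (EsubG hok (i := l) _) _; first by lia.
  by apply: IH => //; lia.
- move=> G s t k Gs [k2' _ hV hE] _ IH x; rewrite hV => /bigcupP [j _ hx].
  apply: connect_mono (IH j (ltn_ord j) x hx).
  by rewrite hE; apply/subsetP => e he; apply/bigcupP; exists j.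
Qed.

Lemma SP_avoid H a b : SP H a b -> forall x, x \in gV H -> x != b ->
  connect (adj (Eav (gE H) b)) a x.
Proof.
elim => {H a b}.
- move=> a b nab x /=; rewrite in_set2 => /orP [/eqP -> _|/eqP ->]; first exact: connect0.
  by rewrite eqxx.
- move=> G s t k Gs ss ts hser hsp IH x.
  have hok : SerOK G s t k Gs ss ts by split => // i hi; apply: SP_basic (hsp i hi).
  move=> /(inVG hok) [j hj hx] hxt.
  have k2' := k2 hok.
  have nt : forall l, l < k.-1 -> t \notin gV (Gs l).
    move=> l hl; apply/negP => htl.
    have ht : t \in gV (Gs k.-1) by rewrite -{1}(uk hok); apply: uk_in hok.
    have [E1 E2] := Dlem hok (a := l) (b := k.-1) hl ltac:(lia) htl ht.
    have := u_inj hok (a := k) (b := k.-1) (leqnn k) ltac:(lia).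
    by rewrite (uk hok) -E2 => /(_ erefl); lia.
  have hc : forall l, l <= k.-1 -> connect (adj (Eav (gE G) t)) (su k ss t 0) (su k ss t l).
    move=> l hl; apply: (chain hok) => [|i hi]; first by lia.
    rewrite (u_ss hok); last by lia.
    apply: connect_mono (SP_conn (hsp i ltac:(lia)) (uS_in hok (i := i) ltac:(lia))).
    by apply: sub_Eav (hsp i _) (EsubG hok _) (nt i _); lia.
  rewrite -(u0 hok).
  case: (ltnP j k.-1) => hj'.
    apply: connect_trans (hc j (ltnW hj')) _.
    rewrite (u_ss hok) //; apply: connect_mono (SP_conn (hsp j hj) hx).
    by apply: sub_Eav (hsp j _) (EsubG hok _) (nt j _).
  have ej : j = k.-1 by lia.
  apply: connect_trans (hc j ltac:(lia)) _.
  rewrite (u_ss hok) //.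
  have tt : ts j = t by rewrite ej; case: hser.
  have := IH j hj x hx; rewrite tt => /(_ hxt); apply: connect_mono.
  by apply: Eav_mono; exact: (EsubG hok hj).
- move=> G s t k Gs [k2' _ hV hE] _ IH x; rewrite hV => /bigcupP [j _ hx] hxt.
  apply: connect_mono (IH j (ltn_ord j) x hx hxt).
  by apply: Eav_mono; rewrite hE; apply/subsetP => e he; apply/bigcupP; exists j.
Qed.

Lemma NS_conn H a b : SP H a b -> non_serial H a b -> forall v, v \in gV H ->
  v != a -> v != b -> connect (adj (Eav (gE H) v)) a b.
Proof.
case => {H a b}.
- by move=> a b nab _ v /=; rewrite in_set2 => /orP [] /eqP -> ; rewrite eqxx.
- move=> G s t k Gs ss ts hser hsp hns; exfalso; apply: hns.
  by exists k, Gs, ss, ts; split.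
- move=> G s t k Gs [k2' hI hV hE] hsp _ v; rewrite hV => /bigcupP [j _ hv] hvs hvt.
  pose j' := if j == 0 :> nat then 1 else 0.
  have hj' : j' < k by rewrite /j'; case: ifP; lia.
  have nj : j' != j by rewrite /j'; case: ifP => /eqP; lia.
  have nv : v \notin gV (Gs j').
    apply/negP => hv'; have := hI j j' (ltn_ord j) hj' ltac:(by rewrite eq_sym).
    by move/setP/(_ v); rewrite !inE hv hv' (negbTE hvs) (negbTE hvt).
  have [_ _ hb] := SP_basic (hsp j' hj').
  apply: connect_mono (SP_conn (hsp j' hj') hb).
  apply: sub_Eav (hsp j' hj') _ nv.
  by rewrite hE; apply/subsetP => e he; apply/bigcupP; exists (Ordinal hj').
Qed.

End SPlemmas.


Section Main.
Variable T : finType.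
Variables (G : graph T) (s t : T) (k : nat) (Gs : nat -> graph T) (ss ts : nat -> T).
Hypothesis hser : serial_cond G s t k Gs ss ts.
Hypothesis hsp : forall i, i < k -> SP (Gs i) (ss i) (ts i).
Hypothesis hns : forall i, i < k -> non_serial (Gs i) (ss i) (ts i).

Let hok : SerOK G s t k Gs ss ts := conj hser (fun i hi => SP_basic (hsp hi)).
Let hG : SP G s t := SP_serial hser hsp.

Local Notation u := (su k ss t).
Local Notation V i := (gV (Gs i)).
Local Notation reach c a b := (connect (adj (Eav (gE G) c)) a b).
Local Notation Cut c := [&& c \in gV G, c != s, c != t & ~~ reach c s t].
Local Notation Sep c x := (Cut c && (c != x) && ~~ reach c s x).

Lemma mem_edgeP j e z : j < k -> e \in gE (Gs j) -> z \in e -> z \in V j.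
Proof. by move=> hj; apply: mem_edge (hsp hj). Qed.

Lemma two_pieces l j x y : l < k -> j < k -> x != y -> x \in V l -> y \in V l ->
  x \in V j -> y \in V j -> l = j.
Proof.
move=> hl hj nxy hxl hyl hx hy.
case: (ltngtP l j) => h //.
- have [_ ex] := Dlem hok h hj hxl hx; have [_ ey] := Dlem hok h hj hyl hy.
  by move: nxy; rewrite ex ey eqxx.
- have [_ ex] := Dlem hok h hl hx hxl; have [_ ey] := Dlem hok h hl hy hyl.
  by move: nxy; rewrite ex ey eqxx.
Qed.

Lemma edge_piece j x y : j < k -> x != y -> x \in V j -> y \in V j ->
  [set x; y] \in gE G -> [set x; y] \in gE (Gs j).
Proof.
move=> hj nxy hx hy /(inEG hok) [l hl he].
have hxl := mem_edgeP hl he (set21 x y); have hyl := mem_edgeP hl he (set22 x y).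
by rewrite -(two_pieces hl hj nxy hxl hyl hx hy).
Qed.

Lemma Edisj l j e : l < k -> j < k -> e \in gE (Gs l) -> e \in gE (Gs j) -> l = j.
Proof.
move=> hl hj hel hej; have [x [y [nxy hx hy ee]]] := SP_edges (hsp hl) hel.
have hxj := mem_edgeP hj hej (_ : x \in e); have hyj := mem_edgeP hj hej (_ : y \in e).
by apply: (two_pieces hl hj nxy hx hy); [apply: hxj | apply: hyj]; rewrite ee ?set21 ?set22.
Qed.

Lemma us_neq m : 0 < m -> m <= k -> u m != s.
Proof. by move=> m0 mk; rewrite -(u0 hok); apply/eqP => /(u_inj hok mk (leq0n k)); lia. Qed.

Lemma ut_neq m : m < k -> u m != t.
Proof.
move=> mk; apply/eqP => e.
by have := u_inj hok (ltnW mk) (leqnn k) (etrans e (esym (uk hok))); lia.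
Qed.

Lemma R1 m y j : 0 < m -> m < k -> j < k -> m <= j -> y \in V j -> y != u m ->
  ~~ reach (u m) s y.
Proof.
move=> m0 mk jk mj hy ny; apply/negP => hr.
pose L := fun z => [exists l : 'I_k, (l < m) && (z \in V l)] && (z != u m).
have : L y.
  apply: (@connect_closure _ _ L _ s y hr).
    move=> a b; rewrite /adj inE => /andP [he hca] /andP [/existsP [l /andP [hl hal]] nam].
    have [j' hj' he'] := inEG hok he.
    have ha' := mem_edgeP hj' he' (set21 a b); have hb' := mem_edgeP hj' he' (set22 a b).
    have nbm : b != u m by apply/eqP => e; move: hca; rewrite e set22.
    apply/andP; split => //.
    case: (ltnP j' m) => hj'm; last first.
      have [e1 e2] := Dlem hok (a := l) (b := j') ltac:(lia) hj' hal ha'.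
      by have ejm : j' = m := ltac:(lia); move: nam; rewrite e2 ejm eqxx.
    by apply/existsP; exists (Ordinal hj'); rewrite /= hj'm hb'.
  apply/andP; split.
    apply/existsP; exists (Ordinal (k0 hok)); rewrite /= m0 -(u0 hok).
    exact: (u_in hok (k0 hok)).
  by rewrite eq_sym us_neq // ltnW.
case/andP => /existsP [l /andP [hl hyl]] _.
have [e1 e2] := Dlem hok (a := l) (b := j) ltac:(lia) jk hyl hy.
by have ejm : j = m := ltac:(lia); move: ny; rewrite e2 ejm eqxx.
Qed.

Lemma reach_u c j : j <= k -> (forall l, l < j -> c \notin V l) -> reach c s (u j).
Proof.
move=> hj H; rewrite -(u0 hok); apply: (chain hok) => // l hl.
have lk : l < k by lia.
rewrite (u_ss hok lk); apply: connect_mono (SP_conn (hsp lk) (uS_in hok lk)).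
exact: sub_Eav (hsp lk) (EsubG hok lk) (H l hl).
Qed.

Lemma reachV c j y : j < k -> (forall l, l <= j -> c \notin V l) -> y \in V j -> reach c s y.
Proof.
move=> hj H hy; apply: connect_trans (reach_u (j := j) (ltnW hj) (fun l hl => H l (ltnW hl))) _.
rewrite (u_ss hok hj); apply: connect_mono (SP_conn (hsp hj) hy).
exact: sub_Eav (hsp hj) (EsubG hok hj) (H j (leqnn j)).
Qed.

Lemma P2 j y : j < k -> y \in V j -> y != u j.+1 -> reach (u j.+1) s y.
Proof.
move=> hj hy ny.
have nc : forall l, l < j -> u j.+1 \notin V l.
  move=> l hl; apply/negP => hin.
  have [e1 e2] := Dlem hok hl hj hin (uS_in hok hj).
  by have := u_inj hok (a := j.+1) (b := j) hj (ltnW hj) e2; lia.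
apply: connect_trans (reach_u (ltnW hj) nc) _.
rewrite (u_ss hok hj); have := SP_avoid (hsp hj) hy; rewrite (ts_u hok hj) => /(_ ny).
by apply: connect_mono; apply: Eav_mono; exact: (EsubG hok hj).
Qed.

Lemma cut_u m : 0 < m -> m < k -> Cut (u m).
Proof.
move=> m0 mk; apply/and4P; split.
- exact: (subsetP (VsubG hok mk)) _ (u_in hok mk).
- by rewrite us_neq // ltnW.
- exact: ut_neq.
- apply: (R1 (j := k.-1)) => //; try lia.
    by have := uk_in hok; rewrite (uk hok).
  by rewrite eq_sym ut_neq.
Qed.

Lemma int_not_u i x m : i < k -> x \in V i -> x != u i -> x != u i.+1 -> m <= k -> x != u m.
Proof.
move=> hi hx n1 n2 mk; apply/eqP => e.
case: (ltngtP m i) => h.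
- have hxm : x \in V m by rewrite e; apply: (u_in hok); lia.
  by have [_ e2] := Dlem hok h hi hxm hx; move: n1; rewrite e2 eqxx.
- case: (ltngtP m i.+1) => h2; first by lia.
  + have hm1 : m.-1 < k by lia.
    have hxm : x \in V m.-1 by rewrite e; have := uS_in hok hm1; rewrite prednK //; lia.
    have [e1 e2] := Dlem hok (a := i) (b := m.-1) ltac:(lia) hm1 hx hxm.
    by move: n2; rewrite e2 e1 eqxx.
  + by move: n2; rewrite e h2 eqxx.
- by move: n1; rewrite e h eqxx.
Qed.

Lemma R2 i v : i < k -> v \in V i -> v != u i -> v != u i.+1 -> reach v s t.
Proof.
move=> hi hv n1 n2.
rewrite -(u0 hok) -{2}(uk hok); apply: (chain hok) => // l hl.
case: (eqVneq l i) => [->|nli].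
  have := NS_conn (hsp hi) (hns hi) hv; rewrite -(u_ss hok hi) (ts_u hok hi) => /(_ n1 n2).
  by apply: connect_mono; apply: Eav_mono; exact: (EsubG hok hi).
have nv : v \notin V l.
  apply/negP => hvl; case: (ltngtP l i) => h.
  - by have [_ e2] := Dlem hok h hi hvl hv; move: n1; rewrite e2 eqxx.
  - by have [e1 e2] := Dlem hok h hl hv hvl; move: n2; rewrite e2 e1 eqxx.
  - by move: nli; rewrite h eqxx.
rewrite (u_ss hok hl); apply: connect_mono (SP_conn (hsp hl) (uS_in hok hl)).
exact: sub_Eav (hsp hl) (EsubG hok hl) nv.
Qed.

Lemma classify x : x \in gV G ->
  (exists2 m, m <= k & x = u m) \/ exists i, [/\ i < k, x \in V i, x != u i & x != u i.+1].
Proof.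
move=> /(inVG hok) [i hi hx].
case: (eqVneq x (u i)) => [->|n1]; first by left; exists i => //; apply: ltnW.
case: (eqVneq x (u i.+1)) => [->|n2]; first by left; exists i.+1.
by right; exists i.
Qed.

Lemma cut_cases c : Cut c -> exists2 m, 0 < m < k & c = u m.
Proof.
case/and4P => hc ns nt nr; case: (classify hc) => [[m hm ec]|[i [hi hx n1 n2]]].
  exists m => //; apply/andP; split.
    by case: (posnP m) => [e|//]; move: ns; rewrite ec e (u0 hok) eqxx.
  by case: (ltngtP m k) => // h; [lia | move: nt; rewrite ec h (uk hok) eqxx].
by move: nr; rewrite (R2 hi hx n1 n2).
Qed.

Lemma sep_uu j m : 0 < j -> j < k -> 0 < m -> m < k -> Sep (u j) (u m) = (j < m).
Proof.
move=> j0 jk m0 mk; case: (ltnP j m) => h.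
  rewrite cut_u //=; apply/andP; split.
    by apply/eqP => /(u_inj hok (ltnW jk) (ltnW mk)); lia.
  apply: (R1 (j := m)) => //; first by lia.
    exact: (u_in hok mk).
  by apply/eqP => /(u_inj hok (ltnW mk) (ltnW jk)); lia.
case: (eqVneq j m) => [->|njm]; first by rewrite eqxx andbF.
rewrite (reach_u (j := m)) ?andbF //; first by lia.
move=> l hl; apply/negP => hin.
by have [e1 _] := Dlem hok (a := l) (b := j) ltac:(lia) jk hin (u_in hok jk); lia.
Qed.

Lemma sep_int m i x : 0 < m -> m < k -> i < k -> x \in V i -> x != u i -> x != u i.+1 ->
  Sep (u m) x = (m <= i).
Proof.
move=> m0 mk hi hx n1 n2; case: (leqP m i) => h.
  rewrite cut_u //=; apply/andP; split.
    by rewrite eq_sym (int_not_u hi hx n1 n2) // ltnW.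
  apply: (R1 (j := i)) => //.
  by rewrite (int_not_u hi hx n1 n2) // ltnW.
case: (eqVneq m i.+1) => [->|nm].
  by rewrite (P2 hi hx n2) andbF.
have hr : reach (u m) s x.
  apply: (reachV (j := i)) => // l hl; apply/negP => hin.
  by have [e1 _] := Dlem hok (a := l) (b := m) ltac:(lia) mk hin (u_in hok mk); lia.
by rewrite hr andbF.
Qed.

Section Aut.
Variable sigma : {perm T}.
Hypothesis hs : is_aut_or G s t sigma.

Lemma aut_parts : [/\ sigma @: gV G = gV G,
  forall x y, x \in gV G -> y \in gV G ->
    ([set sigma x; sigma y] \in gE G) = ([set x; y] \in gE G),
  sigma s = s & sigma t = t].
Proof.
case/and4P: hs => /eqP hV /forallP hE /eqP hs0 /eqP ht0; split => // x y hx hy.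
by have := implyP (hE x) hx => /forallP /(_ y) /implyP /(_ hy) /eqP ->.
Qed.

Lemma aut_V x : (sigma x \in gV G) = (x \in gV G).
Proof. by case: aut_parts => hV _ _ _; rewrite -{1}hV mem_imset //; apply: perm_inj. Qed.

Lemma aut_E : hat sigma @: gE G = gE G.
Proof.
case: aut_parts => hV hE _ _.
apply/eqP; rewrite eqEcard card_imset ?leqnn ?andbT; last exact: hat_inj.
apply/subsetP => e' /imsetP [e he ->].
have [x [y [nxy hx hy ee]]] := SP_edges hG he.
by rewrite ee /hat imset_set2 hE // -ee.
Qed.

Lemma aut_Eav c : hat sigma @: Eav (gE G) c = Eav (gE G) (sigma c).
Proof.
apply/setP => e; apply/imsetP/idP.
  case=> e' he' ->; move: he'; rewrite !inE => /andP [he' hc].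
  rewrite /hat mem_imset ?hc ?andbT; last exact: perm_inj.
  by rewrite -aut_E; apply: imset_f.
rewrite inE => /andP [he hc]; move: he hc; rewrite -{1}aut_E => /imsetP [e' he' ->] hc.
exists e' => //; rewrite inE he' /=.
by move: hc; rewrite /hat mem_imset //; apply: perm_inj.
Qed.

End Aut.

Lemma reach_aut sigma c a b : is_aut_or G s t sigma -> reach c a b ->
  reach (sigma c) (sigma a) (sigma b).
Proof.
move=> hs; rewrite -(aut_Eav hs); apply: connect_map => x y hxy; right.
by rewrite /adj /hat -imset_set2; apply: imset_f.
Qed.

Lemma reach_autE sigma c a b : is_aut_or G s t sigma ->
  reach (sigma c) (sigma a) (sigma b) = reach c a b.
Proof.
move=> hs; apply/idP/idP; last exact: reach_aut.
by move=> h; have := reach_aut (aut_inv hs) h; rewrite !permK.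
Qed.

Lemma cut_aut sigma c : is_aut_or G s t sigma -> Cut (sigma c) = Cut c.
Proof.
move=> hs; have [hV _ hs0 ht0] := aut_parts hs.
have e1 : (sigma c != s) = (c != s) by rewrite -{1}hs0 (inj_eq perm_inj).
have e2 : (sigma c != t) = (c != t) by rewrite -{1}ht0 (inj_eq perm_inj).
have e4 : reach (sigma c) s t = reach c s t by rewrite -{1}hs0 -{1}ht0 reach_autE.
by rewrite aut_V // e1 e2 e4.
Qed.

Lemma sep_aut sigma c x : is_aut_or G s t sigma -> Sep (sigma c) (sigma x) = Sep c x.
Proof.
move=> hs; have [hV _ hs0 ht0] := aut_parts hs.
have e3 : (sigma c != sigma x) = (c != x) by rewrite (inj_eq perm_inj).
have e5 : reach (sigma c) s (sigma x) = reach c s x by rewrite -{1}hs0 reach_autE.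
by rewrite cut_aut // e3 e5.
Qed.

Lemma aut_fix sigma m : is_aut_or G s t sigma -> m <= k -> sigma (u m) = u m.
Proof.
move=> hs; have [hV _ hs0 ht0] := aut_parts hs.
elim/ltn_ind: m => m IH hm.
case: (posnP m) => [->|m0]; first by rewrite (u0 hok).
have [mk|mk] : m < k \/ m = k by lia.
  2: by rewrite mk (uk hok).
have cm : Cut (sigma (u m)) by rewrite cut_aut // cut_u.
have [m' /andP [m'0 m'k] e] := cut_cases cm.
case: (ltngtP m' m) => h.
- have := IH m' h (ltnW m'k); rewrite -{2}e => /perm_inj /(u_inj hok (ltnW m'k) (ltnW mk)).
  by lia.
- pose y := (sigma^-1)%g (u m).
  have sy : sigma y = u m by rewrite /y permKV.
  have cy : Cut y by rewrite -(cut_aut y hs) sy cut_u.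
  have [m'' /andP [m''0 m''k] ey] := cut_cases cy.
  have := sep_uu m0 mk m'0 m'k; rewrite h -sy -e sep_aut // ey sep_uu // => hlt.
  have := IH m'' hlt (ltnW m''k); rewrite -ey sy ey => /(u_inj hok (ltnW mk) (ltnW m''k)).
  by lia.
- by rewrite e h.
Qed.

Lemma aut_int sigma i x : is_aut_or G s t sigma -> i < k -> x \in V i -> x != u i ->
  x != u i.+1 -> sigma x \in V i.
Proof.
move=> hs hi hx n1 n2.
have hxG : sigma x \in gV G by rewrite aut_V //; apply: (subsetP (VsubG hok hi)).
case: (classify hxG) => [[m hm e]|[j [hj hxj n1' n2']]].
  by move: e; rewrite -(aut_fix hs hm) => /perm_inj e; move: (int_not_u hi hx n1 n2 hm); rewrite e eqxx.
case: (ltngtP j i) => h.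
- have i0 : 0 < i by lia.
  have A := sep_int (m := i) (i := i) (x := x) i0 hi hi hx n1 n2.
  have B := sep_int (m := i) (i := j) (x := sigma x) i0 hi hj hxj n1' n2'.
  move: A; rewrite -(sep_aut _ _ hs) (aut_fix hs (ltnW hi)) B leqnn => hij.
  by rewrite ltnNge hij in h.
- have j0 : 0 < j by lia.
  have A := sep_int (m := j) (i := j) (x := sigma x) j0 hj hj hxj n1' n2'.
  have B := sep_int (m := j) (i := i) (x := x) j0 hj hi hx n1 n2.
  move: A; rewrite -(aut_fix hs (ltnW hj)) sep_aut // B leqnn => hij.
  by rewrite ltnNge hij in h.
- by rewrite -h.
Qed.

Lemma aut_Vi sigma i : is_aut_or G s t sigma -> i < k -> sigma @: V i = V i.
Proof.
move=> hs hi; apply/eqP; rewrite eqEcard card_imset ?leqnn ?andbT; last exact: perm_inj.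
apply/subsetP => y /imsetP [x hx ->].
case: (eqVneq x (u i)) => [->|n1]; first by rewrite aut_fix ?(u_in hok hi) // ltnW.
case: (eqVneq x (u i.+1)) => [->|n2]; first by rewrite aut_fix ?(uS_in hok hi).
exact: aut_int.
Qed.

Lemma aut_Ei sigma i : is_aut_or G s t sigma -> i < k -> hat sigma @: gE (Gs i) = gE (Gs i).
Proof.
move=> hs hi; have [hV hE _ _] := aut_parts hs.
apply/eqP; rewrite eqEcard card_imset ?leqnn ?andbT; last exact: hat_inj.
apply/subsetP => e' /imsetP [e he ->].
have [x [y [nxy hx hy ee]]] := SP_edges (hsp hi) he.
have hx' : sigma x \in V i by rewrite -(aut_Vi hs hi) imset_f.
have hy' : sigma y \in V i by rewrite -(aut_Vi hs hi) imset_f.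
rewrite ee /hat imset_set2; apply: edge_piece => //.
  by rewrite (inj_eq perm_inj).
rewrite hE; first by rewrite -ee (subsetP (EsubG hok hi)).
  exact: (subsetP (VsubG hok hi)).
exact: (subsetP (VsubG hok hi)).
Qed.

Lemma aut_piece sigma i : is_aut_or G s t sigma -> i < k -> is_aut_or (Gs i) (ss i) (ts i) sigma.
Proof.
move=> hs hi; apply/and4P; split.
- by rewrite aut_Vi.
- apply/forallP => x; apply/implyP => hx; apply/forallP => y; apply/implyP => hy.
  have := @mem_imset _ _ (hat sigma) (gE (Gs i)) [set x; y] (@hat_inj _ sigma).
  by rewrite (aut_Ei hs hi) /hat imset_set2 => ->.
- by rewrite -(u_ss hok hi) aut_fix // ltnW.
- by rewrite (ts_u hok hi) aut_fix.
Qed.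


Definition Rt j := odflt set0 [pick F | `[< spanning_tree (Gs j) F >] ].

Lemma tree_sub (H : graph T) F : spanning_tree H F -> F \subset gE H.
Proof. by case. Qed.

Lemma R_tree j : j < k -> spanning_tree (Gs j) (Rt j).
Proof.
move=> hj; rewrite /Rt; case: pickP => [F /asboolP //|none]; exfalso.
have [F hF] : exists F, spanning_tree (Gs j) F.
  apply: exists_spanning_tree => x y hx hy.
  apply: connect_trans (_ : connect _ x (ss j)) (SP_conn (hsp hj) hy).
  by rewrite connect_symF; exact: (SP_conn (hsp hj) hx).
by have := none F; rewrite (asboolT hF).
Qed.

Lemma union_tree (Fs : nat -> {set {set T}}) :
  (forall j, j < k -> spanning_tree (Gs j) (Fs j)) ->
  spanning_tree G (\bigcup_(j < k) Fs j).
Proof.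
move=> H; split; [|split].
- apply/subsetP => e /bigcupP [j _ he].
  exact: (subsetP (EsubG hok (ltn_ord j))) _ (subsetP (tree_sub (H j (ltn_ord j))) _ he).
- have hc : forall x, x \in gV G -> connect (adj (\bigcup_(j < k) Fs j)) s x.
    move=> x /(inVG hok) [j hj hx]; rewrite -(u0 hok).
    apply: (chainV hok hj _ hx) => l hl y hy.
    have lk : l < k := leq_ltn_trans hl hj.
    have [_ [cF _]] := H l lk.
    apply: connect_mono (cF _ _ (u_in hok lk) hy).
    by apply/subsetP => e he; apply/bigcupP; exists (Ordinal lk).
  move=> x y hx hy; apply: connect_trans (hc y hy).
  by rewrite connect_symF; apply: hc.
- move=> [c [sc uc]].
  have [x [y [nxy he cyx]]] := cycle_bridge sc uc.
  move: he => /bigcupP [i _ he].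
  have hi := ltn_ord i.
  have [sFi [_ aFi]] := H i hi.
  have hxi : x \in V i := mem_edgeP hi (subsetP sFi _ he) (set21 x y).
  have hyi : y \in V i := mem_edgeP hi (subsetP sFi _ he) (set22 x y).
  pose r z := if z \in V i then z
              else if [exists l : 'I_k, (l < i) && (z \in V l)] then u i else u i.+1.
  have rl : forall (l : nat) z, l < i -> z \in V l -> r z = u i.
    move=> l z hl hz; rewrite /r; case: ifP => hzi.
      by have [_ ->] := Dlem hok hl hi hz hzi.
    case: ifP => // /negbT /existsP []; exists (Ordinal (ltn_trans hl hi)).
    by rewrite /= hl hz.
  have rg : forall (l : nat) z, i < l -> l < k -> z \in V l -> r z = u i.+1.
    move=> l z hl hlk hz; rewrite /r; case: ifP => hzi.
      by have [e1 e2] := Dlem hok hl hlk hzi hz; rewrite e2 e1.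
    case: ifP => // /existsP [l' /andP [hl' hz']].
    have [e1 _] := Dlem hok (a := l') (b := l) (ltn_trans hl' hl) hlk hz' hz.
    by exfalso; move: hl' hl; rewrite e1 ltnS => h1 h2; move: (leq_ltn_trans h2 h1); rewrite ltnn.
  have := @connect_map _ _ (adj (Fs i :\ [set x; y])) r _ _ _ cyx.
  have rx : r x = x by rewrite /r hxi.
  have ry : r y = y by rewrite /r hyi.
  rewrite rx ry.
  have := acyclic_bridge aFi (x := y) (y := x); rewrite eq_sym nxy setUC he => /(_ isT isT).
  move=> /negP nc cm; apply: nc; apply: cm.
  move=> a b; rewrite /adj !inE => /andP [ne /bigcupP [l _ hab]].
  have hl := ltn_ord l; have [sFl _] := H l hl.
  have ha := mem_edgeP hl (subsetP sFl _ hab) (set21 a b).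
  have hb := mem_edgeP hl (subsetP sFl _ hab) (set22 a b).
  case: (ltngtP l i) => h.
  + by left; rewrite (rl l a h ha) (rl l b h hb).
  + by left; rewrite (rg l a h hl ha) (rg l b h hl hb).
  + right; have hai : a \in V i by rewrite -h.
    have hbi : b \in V i by rewrite -h.
    by rewrite /r hai hbi /adj ne /= -h.
Qed.

Definition phi i (A : {set {set T}}) := A :|: \bigcup_(j < k | j != i :> nat) Rt j.

Lemma in_phi i (A : {set {set T}}) e :
  (e \in phi i A) = (e \in A) || [exists j : 'I_k, (j != i :> nat) && (e \in Rt j)].
Proof.
rewrite /phi inE; congr (_ || _).
by apply/bigcupP/existsP => [[j hj he]|[j /andP [hj he]]]; exists j => //; rewrite hj.
Qed.

Lemma NT_tree (H : graph T) (A : {set {set T}}) : A \in NT H ->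
  exists F e, [/\ spanning_tree H F, e \in F & A = F :\ e].
Proof. by rewrite inE => /asboolP [F [e [hF [he ->]]]]; exists F, e. Qed.

Lemma NT_sub i (A : {set {set T}}) : A \in NT (Gs i) -> A \subset gE (Gs i).
Proof.
by case/NT_tree => F [e [hF _ ->]]; apply: subset_trans (subsetDl _ _) (tree_sub hF).
Qed.

Lemma phi_NT i (A : {set {set T}}) : i < k -> A \in NT (Gs i) -> phi i A \in NT G.
Proof.
move=> hi /NT_tree [F [e [hF he ->]]].
pose Fs j := if j == i then F else Rt j.
have hFs : forall j, j < k -> spanning_tree (Gs j) (Fs j).
  by move=> j hj; rewrite /Fs; case: eqP => [->|_]; [exact: hF | exact: R_tree].
rewrite inE; apply/asboolP; exists (\bigcup_(j < k) Fs j), e; split; first exact: union_tree.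
split; first by apply/bigcupP; exists (Ordinal hi); rewrite // /Fs eqxx.
apply/setP => f; rewrite in_phi !inE.
apply/idP/idP.
- case/orP => [/andP [nf hf] | /existsP [j /andP [hj hfj]]].
  + by rewrite nf; apply/bigcupP; exists (Ordinal hi); rewrite // /Fs eqxx.
  + have ne : f != e.
      apply/eqP => fe; move: hj.
      have hfi : f \in gE (Gs i) by rewrite fe; apply: (subsetP (tree_sub hF)).
      by rewrite (Edisj (ltn_ord j) hi (subsetP (tree_sub (R_tree (ltn_ord j))) _ hfj) hfi) eqxx.
    by rewrite ne; apply/bigcupP; exists j; rewrite // /Fs (negbTE hj).
- case/andP => nf /bigcupP [j _]; rewrite /Fs; case: eqP => [ej hf|nj hf].
  + by rewrite nf hf.
  + by apply/orP; right; apply/existsP; exists j; rewrite hf andbT; apply/eqP.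
Qed.

Lemma phi_cap i (A : {set {set T}}) j : i < k -> j < k -> A \subset gE (Gs i) ->
  phi i A :&: gE (Gs j) = if j == i then A else Rt j.
Proof.
move=> hi hj sA; apply/setP => e; rewrite inE in_phi.
case: (eqVneq j i) => [->|nji].
- apply/idP/idP.
  + case/andP => /orP [//|/existsP [l /andP [hl hel]]] hei.
    by move: hl; rewrite (Edisj (ltn_ord l) hi (subsetP (tree_sub (R_tree (ltn_ord l))) _ hel) hei) eqxx.
  + by move=> heA; rewrite heA (subsetP sA).
- apply/idP/idP.
  + case/andP => /orP [heA|/existsP [l /andP [hl hel]]] hej.
    * by move: nji; rewrite (Edisj hi hj (subsetP sA _ heA) hej) eqxx.
    * by have := Edisj (ltn_ord l) hj (subsetP (tree_sub (R_tree (ltn_ord l))) _ hel) hej => <-.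
  + move=> hej; rewrite (subsetP (tree_sub (R_tree hj)) _ hej) andbT; apply/orP; right.
    by apply/existsP; exists (Ordinal hj); rewrite /= nji hej.
Qed.

Lemma orbit_rel sigma i i' (A A' : {set {set T}}) : is_aut_or G s t sigma -> i < k -> i' < k ->
  A \in NT (Gs i) -> A' \in NT (Gs i') ->
  img_edges sigma (phi i A) = phi i' A' -> i = i' /\ img_edges sigma A = A'.
Proof.
move=> hs hi hi' hA hA' E.
have sA := NT_sub hA; have sA' := NT_sub hA'.
have key : hat sigma @: A = if i == i' then A' else Rt i.
  have := congr1 (fun B => B :&: gE (Gs i)) E => /=.
  rewrite (phi_cap hi' hi sA') img_edgesE -{1}(aut_Ei hs hi) -hatI.
  by rewrite (phi_cap hi hi sA) eqxx.
case: (eqVneq i i') => [ei|ni].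
  by split => //; rewrite img_edgesE key ei eqxx.
exfalso; rewrite (negbTE ni) in key.
have [F [e [hF he eA]]] := NT_tree hA.
have [x [y [nxy hx hy ee]]] := SP_edges (hsp hi) (subsetP (tree_sub hF) _ he).
have cA : connected_on (V i) A.
  have := connected_transport (sigma := (sigma^-1)%g) (R_tree hi).2.1.
  by rewrite -key (aut_Vi (aut_inv hs) hi) -!img_edgesE imgK.
have := acyclic_bridge hF.2.2 nxy; rewrite -ee => /(_ he).
by rewrite -eA (cA x y hx hy).
Qed.

Lemma main_ineq :
  \sum_(i < k) #|gV (Gs i)| * n_orbits (Gs i) (ss i) (ts i) <= #|gV G| * n_orbits G s t.
Proof.
pose Q i := [set NT_orbit G s t (phi i A) | A in NT (Gs i)].
have h1 : forall i, i < k -> n_orbits (Gs i) (ss i) (ts i) <= #|Q i|.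
  move=> i hi; rewrite /n_orbits /Q; apply: (card_imset_le set0) => A A' hA hA' eq.
  have : phi i A' \in NT_orbit G s t (phi i A) by rewrite eq; apply: orbit_self; apply: phi_NT.
  rewrite inE => /andP [_ /existsP [sigma /andP [hs /eqP e]]].
  have [_ e2] := orbit_rel hs hi hi hA hA' (esym e).
  by rewrite -e2 orbit_eq //; apply: aut_piece.
have h2 : \sum_(i < k) #|Q i| <= n_orbits G s t.
  apply: sum_disj_card.
    move=> i hi; apply/subsetP => O /imsetP [A hA ->].
    by apply: imset_f; apply: phi_NT.
  move=> i j hi hj nij; apply/setP => O; rewrite !inE.
  apply/negP => /andP [/imsetP [A hA ->] /imsetP [A' hA' eq]].
  have : phi j A' \in NT_orbit G s t (phi i A) by rewrite eq; apply: orbit_self; apply: phi_NT.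
  rewrite inE => /andP [_ /existsP [sigma /andP [hs /eqP e]]].
  have [eij _] := orbit_rel hs hi hj hA hA' (esym e).
  by rewrite eij eqxx in nij.
apply: leq_trans (_ : \sum_(i < k) #|gV G| * #|Q i| <= _).
  apply: leq_sum => i _; apply: leq_mul.
    exact: subset_leq_card (VsubG hok (ltn_ord i)).
  exact: h1 (ltn_ord i).
by rewrite -big_distrr /=; apply: leq_mul.
Qed.

End Main.


Theorem lemma5p14 :
  exists C : nat, 0 < C /\
  forall (T : finType) (G : graph T) (s t : T) (k : nat)
         (Gs : nat -> graph T) (ss ts : nat -> T),
    serial_superedge G s t k Gs ss ts ->
    (forall i, i < k -> non_serial (Gs i) (ss i) (ts i)) ->
    \sum_(i < k) #|gV (Gs i)| * n_orbits (Gs i) (ss i) (ts i)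
      <= C * #|gV G| * n_orbits G s t.
Proof.
exists 1; split => //.
move=> T G s t k Gs ss ts [hser hsp] hns.
by rewrite mul1n; exact: (main_ineq hser hsp hns).
Qed.
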